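(* Let $X$ be a locally compact Polish space and $B\subseteq X$ dense. Suppose $\succeq$ and $\succeq'$ are complete, continuous, and locally strict binary relations on $X$. If $\succeq\cap(B\times B)\subseteq\succeq'\cap(B\times B)$, then $\succeq=\succeq'$.
   Context: A binary relation $\succeq\subseteq X\times X$ is complete if for all $x,y$, $x\succeq y$ or $y\succeq x$; continuous if it is closed in $X\times X$; locally strict if for all $x\succeq y$ and every neighborhood $V$ of $(x,y)$ in $X\times X$ there is $(x',y')\in V$ with $x'\succ y'$, where $x'\succ y'$ means $x'\succeq y'$ and not $y'\succeq x'$. *)

(* Defs.v *)
From mathcomp Require Import all_boot all_algebra.
From mathcomp Require Import all_classical all_reals all_analysis.
Local Open Scope classical_set_scope.

Definition separable_space (T : topologicalType) : Prop :=
  exists S : set T, countable S /\ dense S.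

Definition rel_strict {X : Type} (succeq : set (X * X)) (x y : X) : Prop :=
  succeq (x, y) /\ ~ succeq (y, x).

Definition rel_complete {X : Type} (succeq : set (X * X)) : Prop :=
  forall x y : X, succeq (x, y) \/ succeq (y, x).

Definition rel_continuous {X : topologicalType} (succeq : set (X * X)) : Prop :=
  closed succeq.

Definition rel_locally_strict {X : topologicalType} (succeq : set (X * X)) : Prop :=
  forall x y : X, succeq (x, y) ->
  forall V : set (X * X), nbhs (x, y) V ->
  exists x' y' : X, V (x', y') /\ rel_strict succeq x' y'.

(* Main.v *)
Require Import Defs.
From mathcomp Require Import all_boot all_algebra.
From mathcomp Require Import all_classical all_reals all_analysis.
Local Open Scope classical_set_scope.

Lemma dense_nbhs (T : topologicalType) (B : set T) (x : T) (A : set T) :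
  dense B -> nbhs x A -> exists b, B b /\ A b.
Proof.
move=> dB /nbhs_interior xA.
have [b [/interior_subset Ab Bb]] := dB _ (ex_intro _ x (nbhs_singleton xA)) (@open_interior _ A).
by exists b.
Qed.

Lemma dense_prod (T : topologicalType) (B : set T) (W : set (T * T)) (p : T * T) :
  dense B -> open W -> W p -> exists b b', [/\ B b, B b' & W (b, b')].
Proof.
move=> dB oW Wp.
have : nbhs p W by apply: open_nbhs_nbhs; split.
case=> -[A1 A2] /= [h1 h2] sub.
have [b [Bb A1b]] := @dense_nbhs _ _ _ _ dB h1.
have [b' [Bb' A2b']] := @dense_nbhs _ _ _ _ dB h2.
by exists b, b'; split => //; apply: sub.
Qed.

Lemma incl (T : topologicalType) (B : set T) (S U : set (T * T)) :
  dense B -> closed S -> open U ->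
  (forall b b', B b -> B b' -> U (b, b') -> S (b, b')) ->
  forall x y : T, (forall V, nbhs (x, y) V -> exists x' y', V (x', y') /\ U (x', y')) ->
  S (x, y).
Proof.
move=> dB cS oU hB x y hxy.
apply: cS => V /nbhs_interior nV.
have [x' [y' [Vi Ux']]] := hxy _ nV.
have [b [b' [Bb Bb' [Vb Ub]]]] := @dense_prod _ _ _ _ dB (openI (@open_interior _ V) oU) (conj Vi Ux').
exists (b, b'); split; [exact: hB | exact: interior_subset].
Qed.

Theorem theorem12 (R : realType) (X : completePseudoMetricType R)
  (hX : hausdorff_space X) (sepX : separable_space X)
  (lcX : locally_compact [set: X])
  (B : set X) (denseB : dense B)
  (S1 S2 : set (X * X))
  (c1 : rel_complete S1) (k1 : rel_continuous S1) (l1 : rel_locally_strict S1)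
  (c2 : rel_complete S2) (k2 : rel_continuous S2) (l2 : rel_locally_strict S2) :
  S1 `&` (B `*` B) `<=` S2 `&` (B `*` B) -> S1 = S2.
Proof.
move=> H.
have oT (S : set (X * X)) : closed S -> open [set p | ~ S (p.2, p.1)].
  move=> cS.
  have -> : [set p | ~ S (p.2, p.1)] = (@swap_pair X X) @^-1` (~` S) by [].
  apply: open_comp; last exact: closed_openC.
  by move=> p _; apply: swap_continuous.
apply/seteqP; split => -[x y] Sxy.
- apply: (@incl _ _ _ _ denseB k2 (oT _ k1)).
    move=> b b' Bb Bb' /= U.
    have [S|S] := c1 b b'; last by [].
    by have [] := H (b, b') (conj S (conj Bb Bb')).
  move=> V nV; have [x' [y' [Vx [Sx NSx]]]] := l1 _ _ Sxy _ nV.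
  by exists x', y'.
- apply: (@incl _ _ _ _ denseB k1 (oT _ k2)).
    move=> b b' Bb Bb' /= U.
    have [S|S] := c1 b b'; first by [].
    by have [] := H (b', b) (conj S (conj Bb' Bb)).
  move=> V nV; have [x' [y' [Vx [Sx NSx]]]] := l2 _ _ Sxy _ nV.
  by exists x', y'.
Qed.
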